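(* There exist absolute constants $c_1,c_2>0$ such that for every sufficiently large $n$ there exists a monotone non-negative $\frac{c_1}{n}$-Lipschitz submodular function $f\colon\mathbb F_2^n\to[0,1]$ (a rescaled matroid rank function) with $R^{\to}_{1/3}(f^+)\ge c_2 n$.
   Context: Functions $f\colon 2^{[n]}\to\mathbb R$ are identified with functions on $\mathbb F_2^n$ via $x\leftrightarrow\{i:x_i=1\}$. $f$ is monotone if $f(A)\le f(B)$ for $A\subseteq B$; $\alpha$-Lipschitz if $|f(S\cup\{i\})-f(S)|\le\alpha$ for all $S$, $i$; submodular if $f(A\cup\{i\})-f(A)\ge f(B\cup\{i\})-f(B)$ for all $A\subseteq B\subseteq[n]$, $i\notin B$. The XOR-function of $f$ is $f^+(x,y)=f(x+y)$ (coordinatewise addition mod 2). Randomized one-way communication complexity: $R^{\to}_\delta(f^+)$ is the minimum, over public-coin randomized protocols in which Alice (holding $x\in\mathbb F_2^n$) sends a single message to Bob (holding $y\in\mathbb F_2^n$) who then outputs a value, such that for every $x,y$ Bob's output equals $f^+(x,y)$ with probability at least $1-\delta$, of the maximum message length in bits. *)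

(* Defs.v *)
From mathcomp Require Import all_boot.
From Stdlib Require Import Reals.
Set Implicit Arguments. Unset Strict Implicit. Unset Printing Implicit Defensive.

Local Open Scope R_scope.

(* Vectors of F_2^n, identified with subsets of [n] = 'I_n via x <-> {i | x_i = 1}. *)
Definition F2vec (n : nat) := {ffun 'I_n -> bool}.

Definition addF2 (n : nat) (x y : F2vec n) : F2vec n := [ffun i => x i (+) y i].

Definition supp (n : nat) (x : F2vec n) : {set 'I_n} := [set i | x i].

Definition monotone_sf (n : nat) (f : {set 'I_n} -> R) : Prop :=
  forall A B : {set 'I_n}, A \subset B -> f A <= f B.

Definition lipschitz_sf (n : nat) (alpha : R) (f : {set 'I_n} -> R) : Prop :=
  forall (S : {set 'I_n}) (i : 'I_n), Rabs (f (i |: S) - f S) <= alpha.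

Definition submodular_sf (n : nat) (f : {set 'I_n} -> R) : Prop :=
  forall (A B : {set 'I_n}) (i : 'I_n), A \subset B -> i \notin B ->
    f (i |: A) - f A >= f (i |: B) - f B.

Definition xor_fun (n : nat) (f : {set 'I_n} -> R) (x y : F2vec n) : R :=
  f (supp (addF2 x y)).

(* A public-coin randomized one-way protocol: the public randomness is a finite
   probability space (Omega, mu); Alice, holding x, sends the message
   (a bit string) Alice w x; Bob, holding y, outputs Bob w m y. *)
Record protocol (n : nat) := Protocol {
  Omega : finType;
  mu : Omega -> R;
  Alice : Omega -> F2vec n -> seq bool;
  Bob : Omega -> seq bool -> F2vec n -> R
}.

Definition is_distribution (n : nat) (P : protocol n) : Prop :=
  (forall w, 0 <= @mu n P w) /\ \big[Rplus/0]_(w : @Omega n P) @mu n P w = 1.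

Definition prob_correct (n : nat) (P : protocol n) (F : F2vec n -> F2vec n -> R)
    (x y : F2vec n) : R :=
  \big[Rplus/0]_(w : @Omega n P)
     (if Req_EM_T (@Bob n P w (@Alice n P w x) y) (F x y) then @mu n P w else 0).

Definition computes_with_error (n : nat) (P : protocol n) (delta : R)
    (F : F2vec n -> F2vec n -> R) : Prop :=
  is_distribution P /\ forall x y, prob_correct P F x y >= 1 - delta.

Definition cost (n : nat) (P : protocol n) : nat :=
  \max_(w : @Omega n P) \max_(x : F2vec n) size (@Alice n P w x).

(* R^->_delta(F) >= m, i.e. every valid protocol has cost at least m. *)
Definition oneway_cc_ge (n : nat) (delta : R) (F : F2vec n -> F2vec n -> R)
    (m : R) : Prop :=
  forall P : protocol n, computes_with_error P delta F -> m <= INR (cost P).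

(* Main.v *)
Require Import Defs.
From Stdlib Require Import Reals Lra.
From HB Require Import structures.
From mathcomp Require Import all_boot.
From mathcomp Require Import zify.
Set Implicit Arguments. Unset Strict Implicit. Unset Printing Implicit Defensive.
Local Open Scope R_scope.

HB.instance Definition _ := Monoid.isComLaw.Build R 0 Rplus
  (fun a b c => esym (Rplus_assoc a b c)) Rplus_comm Rplus_0_l.

Lemma sumR_le (T : finType) (F G : T -> R) :
  (forall i, F i <= G i) -> \big[Rplus/0]_(i : T) F i <= \big[Rplus/0]_(i : T) G i.
Proof.
move=> h; apply: (big_rec2 (fun a b => a <= b)); first lra.
move=> i a b _ hab; have := h i; lra.
Qed.

Lemma sumR_const (T : finType) (c : R) : \big[Rplus/0]_(i : T) c = INR #|T| * c.
Proof.
rewrite big_const; elim: #|T| => [|k IH] /=; first lra.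
rewrite IH; destruct k; simpl; lra.
Qed.

Lemma sumR_INR_mul (T : finType) (m : R) (F : T -> nat) :
  \big[Rplus/0]_(i : T) (m * INR (F i)) = m * INR (\sum_(i : T) F i).
Proof.
apply: (big_rec2 (fun a b => a = m * INR b)); first by simpl; lra.
move=> i a b _ ->; rewrite plus_INR; lra.
Qed.

Lemma sumR_mulr (T : finType) (F : T -> R) (k : R) :
  \big[Rplus/0]_(i : T) (F i * k) = (\big[Rplus/0]_(i : T) F i) * k.
Proof.
apply: (big_rec2 (fun a b => a = b * k)); first lra.
move=> i a b _ ->; lra.
Qed.

Lemma sumR_if (T : finType) (c : T -> bool) (m : R) :
  \big[Rplus/0]_(i : T) (if c i then m else 0) = m * INR #|[set i | c i]|.
Proof.
have -> : #|[set i | c i]| = \sum_(i : T) (c i : nat).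
  rewrite -sum1_card big_mkcond /=; apply: eq_bigr => i _; rewrite inE; by case: (c i).
rewrite -sumR_INR_mul; apply: eq_bigr => i _; case: (c i) => /=; lra.
Qed.
Local Open Scope nat_scope.

Lemma final_arith n c g B r :
  1000 <= n -> 2 ^ n <= 60 * g -> g <= 2 ^ c.+1 * n.+1 * B ->
  B * 2 ^ n <= 2 ^ r * 3 ^ n -> 20 * r <= 7 * n -> n <= 100 * c.
Proof.
move=> hn h1 h2 h3 h4.
have h5 : 2 ^ n * 2 ^ n <= (120 * n.+1) * 2 ^ (c + r) * 3 ^ n.
  have e1 : 2 ^ n * 2 ^ n <= 60 * (2 ^ c.+1 * n.+1 * B) * 2 ^ n.
    rewrite leq_mul2r; apply/orP; right; apply: (leq_trans h1).
    by rewrite leq_mul2l h2 orbT.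
  apply: (leq_trans e1).
  rewrite expnS expnD.
  move: (2 ^ c) (2 ^ r) (3 ^ n) (2 ^ n) h3 => a b d e h3.
  have -> : 60 * (2 * a * n.+1 * B) * e = (120 * n.+1 * a) * (B * e) by lia.
  have -> : 120 * n.+1 * (a * b) * d = (120 * n.+1 * a) * (b * d) by lia.
  by rewrite leq_mul2l h3 orbT.
rewrite -expnD -(leq_exp2r _ _ (isT : 0 < 5)) in h5.
rewrite !expnMn -!expnM in h5.
have e3 : 3 ^ (n * 5) <= 2 ^ (8 * n).
  rewrite mulnC !expnM leq_exp2r //; lia.
have h6 : 2 ^ ((n + n) * 5) <= (120 * n.+1) ^ 5 * 2 ^ ((c + r) * 5) * 2 ^ (8 * n).
  apply: (leq_trans h5); rewrite expnMn; exact: leq_mul (leqnn _) e3.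
have h7 : 2 ^ (2 * n) <= (120 * n.+1) ^ 5 * 2 ^ ((c + r) * 5).
  rewrite -(@leq_pmul2r (2 ^ (8 * n))) ?expn_gt0 // -expnD.
  by have -> : 2 * n + 8 * n = (n + n) * 5 by lia.
set s := n %/ 64.
have hs1 : n.+1 <= 64 * 2 ^ s.
  have := ltn_ceil n (isT : 0 < 64); rewrite -/s => hs.
  have := ltn_expl s (isT : 1 < 2); lia.
have hs2 : s * 64 <= n by apply: leq_trunc_div.
have h8 : (120 * n.+1) ^ 5 <= 2 ^ ((13 + s) * 5).
  rewrite expnM leq_exp2r // expnD.
  have -> : 2 ^ 13 = 128 * 64 by [].
  lia.
have h9 : 2 ^ (2 * n) <= 2 ^ ((13 + s) * 5 + (c + r) * 5).
  by rewrite expnD (leq_trans h7) // leq_mul2r h8 orbT.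
rewrite leq_exp2l // in h9.
lia.
Qed.
Lemma sum_sets_pow n :
  \sum_(D : {set 'I_n}) 2 ^ (n - #|D|) = 3 ^ n.
Proof.
have -> : 3 ^ n = (2 + 1) ^ n by [].
rewrite expnDn.
rewrite (partition_big (fun D : {set 'I_n} => (inord #|D| : 'I_n.+1)) xpredT) //=.
apply: eq_bigr => j _.
rewrite exp1n muln1.
have hD : forall D : {set 'I_n}, ((inord #|D| : 'I_n.+1) == j) = (#|D| == j).
  move=> D; apply/eqP/eqP => [<-|->]; last by rewrite inord_val.
  rewrite inordK //; have := max_card D; rewrite card_ord; lia.
rewrite (eq_bigr (fun _ => 2 ^ (n - j))); last first.
  by move=> D; rewrite hD => /eqP ->.
rewrite (eq_bigl (fun D => D \in [set D : {set 'I_n} | #|D| == j])); last first.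
  by move=> D; rewrite /= hD inE.
by rewrite sum_nat_const card_draws card_ord.
Qed.

Lemma ball_bound n r : #|[set D : {set 'I_n} | #|D| <= r]| * 2 ^ n <= 2 ^ r * 3 ^ n.
Proof.
rewrite -sum_sets_pow -sum_nat_const big_distrr /=.
rewrite big_mkcond /=; apply: leq_sum => D _.
rewrite inE; case: ifP => // hr.
rewrite -expnD leq_exp2l //.
have := max_card D; rewrite card_ord; lia.
Qed.
Fixpoint code (s : seq bool) : nat :=
  if s is b :: s' then b + 2 * code s' else 1.

Lemma code_gt0 s : 0 < code s.
Proof. elim: s => [|b s IH] //=; lia. Qed.

Lemma code_inj : injective code.
Proof.
elim=> [|b s IH] [|b' s'] //=.
- have := code_gt0 s'; case: b'; lia.
- have := code_gt0 s; case: b; lia.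
- move=> e.
  have eb : b = b'.
    by move: e; case: b; case: b' => //; lia.
  subst b'; congr (_ :: _); apply: IH; lia.
Qed.

Lemma code_lt s : code s < 2 ^ (size s).+1.
Proof. elim: s => [|b s IH] //=; rewrite expnS; case: b; lia. Qed.

Lemma count_G n c (msg : F2vec n -> seq bool) (b : seq bool -> nat -> 'I_n -> bool)
  (G : {set F2vec n}) :
  (forall x, size (msg x) <= c) ->
  (forall x, x \in G -> 20 * #|[set i | x i != b (msg x) #|supp x| i]| <= 7 * n) ->
  #|G| <= 2 ^ c.+1 * n.+1 * #|[set D : {set 'I_n} | #|D| <= (7 * n) %/ 20]|.
Proof.
move=> hmsg hG.
pose psi (x : F2vec n) := ((code (msg x), #|supp x|), [set i | x i != b (msg x) #|supp x| i]).
have psi_inj : injective psi.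
  move=> x y [/code_inj em ek eD].
  apply/ffunP => i.
  have : (i \in [set i | x i != b (msg x) #|supp x| i]) = (i \in [set i | y i != b (msg y) #|supp y| i]) by rewrite eD.
  rewrite !inE em ek.
  by case: (x i); case: (y i); case: (b _ _ _).
pose L := [seq (p, D) | p <- [seq (a, k) | a <- iota 0 (2 ^ c.+1), k <- iota 0 n.+1],
                        D <- enum [set D : {set 'I_n} | #|D| <= (7 * n) %/ 20]].
have -> : #|G| = size [seq psi x | x <- enum G] by rewrite size_map cardE.
have -> : 2 ^ c.+1 * n.+1 * #|[set D : {set 'I_n} | #|D| <= (7 * n) %/ 20]| = size L.
  by rewrite size_allpairs size_allpairs !size_iota cardE.
apply: uniq_leq_size; first by rewrite map_inj_uniq // enum_uniq.
move=> z /mapP [x]; rewrite mem_enum => xG ->.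
apply: allpairs_f; first apply: allpairs_f.
- rewrite mem_iota add0n; apply: leq_trans (code_lt _) _.
  by rewrite leq_exp2l // ltnS hmsg.
- rewrite mem_iota add0n ltnS; have := max_card (supp x); rewrite card_ord //.
- rewrite mem_enum inE; have := hG x xG.
  move=> h; rewrite leq_divRL // mulnC; exact: h.
Qed.

Local Open Scope R_scope.

Definition fcard (n : nat) (S : {set 'I_n}) : R := INR #|S| / INR n.

Lemma INR_n_ge0 n : 0 <= / INR n.
Proof. destruct n as [|n]; first by rewrite /= Rinv_0; lra.
apply: Rlt_le; apply: Rinv_0_lt_compat; apply: lt_0_INR; apply/ltP. done. Qed.

Lemma fcard_mono n : monotone_sf (@fcard n).
Proof.
move=> A B sAB; rewrite /fcard /Rdiv.
apply: Rmult_le_compat_r; first exact: INR_n_ge0.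
apply: le_INR; apply/leP; exact: subset_leq_card.
Qed.

Lemma fcard_range n (S : {set 'I_n}) : 0 <= fcard S /\ fcard S <= 1.
Proof.
rewrite /fcard /Rdiv; split.
  apply: Rmult_le_pos; [exact: pos_INR | exact: INR_n_ge0].
destruct n as [|n].
  by rewrite /= Rinv_0 Rmult_0_r; lra.
have hn : 0 < INR n.+1 by apply: lt_0_INR; apply/ltP.
rewrite -(Rinv_r (INR n.+1)); last lra.
apply: Rmult_le_compat_r; first exact: INR_n_ge0.
apply: le_INR; apply/leP; have := max_card S; rewrite card_ord //.
Qed.

Lemma fcard_step n (S : {set 'I_n}) i :
  fcard (i |: S) - fcard S = INR (i \notin S) * / INR n.
Proof. rewrite /fcard /Rdiv cardsU1 plus_INR; ring. Qed.

Lemma fcard_lip n : lipschitz_sf (1 / INR n) (@fcard n).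
Proof.
move=> S i; rewrite fcard_step Rabs_pos_eq; last first.
  apply: Rmult_le_pos; [exact: pos_INR | exact: INR_n_ge0].
rewrite /Rdiv Rmult_1_l; have := INR_n_ge0 n.
case: (i \notin S) => /= h; nra.
Qed.

Lemma fcard_sub n : submodular_sf (@fcard n).
Proof.
move=> A B i sAB iB; rewrite !fcard_step.
have iA : i \notin A by apply: contra iB; apply: (subsetP sAB).
rewrite iA iB; lra.
Qed.

Definition ei (n : nat) (i : 'I_n) : F2vec n := [ffun j => j == i].

Definition Rb (a b : R) : bool := if Req_EM_T a b then true else false.

Lemma card_flip n (x : F2vec n) i :
  #|supp (addF2 x (ei i))| = if x i then (#|supp x|).-1 else (#|supp x|).+1.
Proof.
have hi : (i \in supp x) = x i by rewrite /supp inE.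
case hx: (x i).
  have -> : supp (addF2 x (ei i)) = supp x :\ i.
    apply/setP => j; rewrite !inE !ffunE.
    by case: (eqVneq j i) => [->|_]; rewrite ?hx //= addbF; rewrite ?andbT ?andTb ?eqxx //=.
  by rewrite (cardsD1 i (supp x)) hi hx.
have -> : supp (addF2 x (ei i)) = i |: supp x.
  apply/setP => j; rewrite !inE !ffunE.
  by case: (eqVneq j i) => [->|_]; rewrite ?hx //= addbF.
by rewrite cardsU1 hi hx.
Qed.

Lemma RbP a b : Rb a b = true -> a = b.
Proof. by rewrite /Rb; case: Req_EM_T. Qed.
Lemma Rb_refl a : Rb a a = true.
Proof. by rewrite /Rb; case: Req_EM_T. Qed.
Lemma Rb_neq a b : a <> b -> Rb a b = false.
Proof. by rewrite /Rb; case: Req_EM_T. Qed.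

Lemma cc_lower n (P : protocol n) :
  (1000 <= n)%nat -> computes_with_error P (1 / 3) (xor_fun (@fcard n)) ->
  (n <= 100 * cost P)%nat.
Proof.
move=> hn [[hmu0 hmu1] hcorr].
have npos : 0 < INR n by apply: lt_0_INR; apply/ltP; lia.
set F := xor_fun (@fcard n).
pose Cw (w : Omega P) (x : F2vec n) (i : 'I_n) := Rb (Bob w (Alice w x) (ei i)) (F x (ei i)).
pose corr (w : Omega P) (x : F2vec n) := #|[set i | Cw w x i]|.
pose S (w : Omega P) := (\sum_(x : F2vec n) corr w x)%nat.
have A1 : forall x i, prob_correct P F x (ei i) =
    \big[Rplus/0]_(w : Omega P) (if Cw w x i then mu w else 0).
  move=> x i; apply: eq_bigr => w _; rewrite /Cw /Rb.
  by case: Req_EM_T.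
have A2 : \big[Rplus/0]_(x : F2vec n) \big[Rplus/0]_(i : 'I_n) prob_correct P F x (ei i)
    = \big[Rplus/0]_(w : Omega P) (mu w * INR (S w)).
  transitivity (\big[Rplus/0]_(x : F2vec n) \big[Rplus/0]_(w : Omega P) (mu w * INR (corr w x))).
    apply: eq_bigr => x _.
    rewrite (eq_bigr (fun i => \big[Rplus/0]_(w : Omega P) (if Cw w x i then mu w else 0))); last by move=> i _; exact: A1.
    rewrite exchange_big /=; apply: eq_bigr => w _; exact: sumR_if.
  rewrite exchange_big /=; apply: eq_bigr => w _; exact: sumR_INR_mul.
have A3 : INR (2 ^ n) * (INR n * (1 - 1 / 3)) <=
    \big[Rplus/0]_(x : F2vec n) \big[Rplus/0]_(i : 'I_n) prob_correct P F x (ei i).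
  have -> : (2 ^ n)%nat = #|F2vec n| by rewrite card_ffun card_bool card_ord.
  have -> : INR n = INR #|'I_n| by rewrite card_ord.
  rewrite -sumR_const; apply: sumR_le => x.
  rewrite -sumR_const; apply: sumR_le => i.
  apply: Rge_le; exact: hcorr.
have [w0 _] : exists w0 : Omega P, true.
  case: (pickP (@Omega n P)) => [w0 _|h]; first by exists w0.
  move: hmu1; rewrite big_pred0 //; lra.
pose wst := [arg max_(w > w0) S w].
have hmax : forall w, (S w <= S wst)%nat.
  rewrite /wst; case: arg_maxnP => // w1 _ h w; exact: h.
have A5 : \big[Rplus/0]_(w : Omega P) (mu w * INR (S w)) <= INR (S wst).
  apply: (Rle_trans _ (\big[Rplus/0]_(w : Omega P) (mu w * INR (S wst)))).
    apply: sumR_le => w; apply: Rmult_le_compat_l => //.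
    apply: le_INR; apply/leP; exact: hmax.
  rewrite sumR_mulr hmu1; lra.
have A6 : (2 * n * 2 ^ n <= 3 * S wst)%nat.
  apply/leP; apply: INR_le; rewrite !mult_INR.
  have h2 : INR 2 = 2 by simpl; lra.
  have h3 : INR 3 = 3 by simpl; lra.
  rewrite h2 h3; lra.
pose G := [set x : F2vec n | (13 * n <= 20 * corr wst x)%nat].
have corr_le : forall x, (corr wst x <= n)%nat.
  by move=> x; have := max_card [set i | Cw wst x i]; rewrite card_ord.
have B1 : (20 * S wst <= 20 * n * #|G| + 13 * n * 2 ^ n)%nat.
  have per : forall x, (20 * corr wst x <= (if x \in G then 20 * n else 0) + 13 * n)%nat.
    move=> x; rewrite /G inE; case: ifP => h.
      have := corr_le x; lia.
    move/negbT: h; rewrite -ltnNge; lia.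
  rewrite /S big_distrr /=.
  apply: (@leq_trans (\sum_(x : F2vec n) ((if x \in G then 20 * n else 0) + 13 * n))%nat).
    by apply: leq_sum => x _; exact: per.
  rewrite big_split /= -big_mkcond sum_nat_const sum_nat_const card_ffun card_bool card_ord /=.
  lia.
have B2 : (2 ^ n <= 60 * #|G|)%nat.
  have : (n * 2 ^ n <= n * (60 * #|G|))%nat by nia.
  by rewrite leq_pmul2l //; lia.
pose b (m : seq bool) (k : nat) (i : 'I_n) := Rb (Bob wst m (ei i)) (INR k.-1 / INR n).
have C1 := @count_G n (cost P) (Alice wst) b G.
have hmsg : forall x, (size (Alice wst x) <= cost P)%nat.
  move=> x; rewrite /cost.
  apply: (@leq_trans (\max_(x0 : F2vec n) size (Alice wst x0))%nat).
    exact: leq_bigmax.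
  exact: leq_bigmax.
have hG : forall x, x \in G ->
    (20 * #|[set i | x i != b (Alice wst x) #|supp x| i]| <= 7 * n)%nat.
  move=> x; rewrite inE => hx.
  have sub : [set i | x i != b (Alice wst x) #|supp x| i] \subset ~: [set i | Cw wst x i].
    apply/subsetP => i; rewrite !inE; apply: contraNN => hc.
    move/RbP: hc => e.
    rewrite /b e /F /xor_fun /fcard card_flip.
    case hxi: (x i).
      by rewrite Rb_refl.
    rewrite Rb_neq //= => e2.
    have : INR (#|supp x|).+1 = INR (#|supp x|).-1.
      apply: (Rmult_eq_reg_r (/ INR n)); first exact: e2.
      apply: Rinv_neq_0_compat; lra.
    move/INR_eq; lia.
  have := subset_leq_card sub.
  have := cardsC [set i | Cw wst x i]; rewrite card_ord.
  rewrite /corr in hx; lia.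
have C2 := C1 hmsg hG.
apply: (final_arith hn B2 C2 (ball_bound _ _)).
by rewrite mulnC leq_trunc_div.
Qed.

Theorem mainTheorem12 :
  exists c1 c2 : R, 0 < c1 /\ 0 < c2 /\
  exists N : nat, forall n : nat, (N <= n)%nat ->
    exists f : {set 'I_n} -> R,
      monotone_sf f /\
      (forall S, 0 <= f S /\ f S <= 1) /\
      lipschitz_sf (c1 / INR n) f /\
      submodular_sf f /\
      oneway_cc_ge (1 / 3) (xor_fun f) (c2 * INR n).
Proof.
exists 1, (1 / 100); split; first lra; split; first lra.
exists 1000%nat => n hn; exists (@fcard n).
split; first exact: fcard_mono.
split; first exact: fcard_range.
split; first exact: fcard_lip.
split; first exact: fcard_sub.
move=> P hP.
have h := cc_lower hn hP.
have := le_INR _ _ (elimT leP h); rewrite mult_INR.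
have -> : INR 100 = 100 by simpl; lra.
lra.
Qed.
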